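(* Let $D\ge1$, $V\in\mathbb{R}^{d_y\times d_x}$, and $\Sigma\in\mathbb{R}^{d_x\times d_x}$ positive definite. Let $V\Sigma^{1/2}=\hat L\hat S\hat R$ be a compact singular value decomposition with $\hat S\in\mathbb{R}^{r\times r}$ diagonal positive, $r=\mathrm{rank}(V\Sigma^{1/2})$. Consider matrices $W_k\in\mathbb{R}^{d_k\times d_{k-1}}$, $k=1,\dots,D$, with $d_0=d_x$, $d_D=d_y$ and $d_k\ge r$ for all $k$, and define, with $A_k:=W_D\cdots W_{k+1}$ ($A_D=I_{d_y}$) and $B_k:=W_{k-1}\cdots W_1$ ($B_1=I_{d_x}$), $$T(W_1,\dots,W_D)=\sum_{k=1}^D\mathrm{Tr}[A_k^TA_k]\,\mathrm{Tr}[B_k\Sigma B_k^T]$$ (equivalently $d_y\mathrm{Tr}[W_{D-1}\cdots W_1\Sigma W_1^T\cdots W_{D-1}^T]+\mathrm{Tr}[W_D^TW_D]\mathrm{Tr}[W_{D-2}\cdots W_1\Sigma W_1^T\cdots W_{D-2}^T]+\dots+\mathrm{Tr}[W_2^T\cdots W_D^TW_D\cdots W_2]\mathrm{Tr}[\Sigma]$). Then, under the constraint $W_D\cdots W_1=V$, $$\min T(W_1,\dots,W_D)=D(\mathrm{Tr}\hat S)^{2(D-1)/D}(d_y\mathrm{Tr}\Sigma)^{1/D},$$ and the minimum is achieved by $$W_D=(\mathrm{Tr}\hat S)^{-\frac{D-2}{2D}}d_y^{\frac{D-1}{2D}}(\mathrm{Tr}\Sigma)^{-\frac1{2D}}\hat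 L\hat S^{1/2}U_{D-1}^T,\quad W_k=(\mathrm{Tr}\hat S)^{\frac1D}(d_y\mathrm{Tr}\Sigma)^{-\frac1{2D}}U_kU_{k-1}^T\ (2\le k\le D-1),$$ $$W_1\Sigma^{1/2}=(\mathrm{Tr}\hat S)^{-\frac{D-2}{2D}}d_y^{-\frac1{2D}}(\mathrm{Tr}\Sigma)^{\frac{D-1}{2D}}U_1\hat S^{1/2}\hat R,$$ for arbitrary $U_i\in\mathbb{R}^{d_i\times r}$ with $U_i^TU_i=I_r$, $i=1,\dots,D-1$.
   Context: $\mathrm{Tr}\hat S$ is the nuclear norm of $V\Sigma^{1/2}$. *)

(* Defs.v *)
From HB Require Import structures.
From mathcomp Require Import all_boot all_order all_algebra.
From mathcomp Require Import reals exp.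
Set Implicit Arguments. Unset Strict Implicit. Unset Printing Implicit Defensive.
Import Order.TTheory GRing.Theory Num.Theory.
Local Open Scope ring_scope.

Definition posdef (R : realType) (n : nat) (A : 'M[R]_n) : Prop :=
  A^T = A /\ forall x : 'cV[R]_n, x != 0 -> 0 < (x^T *m A *m x) 0 0.

(* Layer widths d : nat -> nat (d 0 = d_x, d D = d_y); layer k >= 1 is
   W k : 'M_(d k, d (k-1)), i.e. W_k of the paper. Values for k = 0 or k > D
   are irrelevant. *)

(* Bprod d W n = W_n ... W_1  (Bprod d W 0 = identity), so B_k = Bprod (k-1). *)
Fixpoint Bprod (R : realType) (d : nat -> nat)
    (W : forall k : nat, 'M[R]_(d k, d k.-1)) (n : nat) : 'M[R]_(d n, d 0) :=
  match n with
  | 0 => 1%:M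
  | n'.+1 => W n'.+1 *m Bprod W n'
  end.

Fixpoint Tprod (R : realType) (d : nat -> nat)
    (W : forall k : nat, 'M[R]_(d k, d k.-1)) (k n : nat) : 'M[R]_(d (n + k), d k) :=
  match n with
  | 0 => 1%:M
  | n'.+1 => W (n' + k).+1 *m Tprod W k n'
  end.

Definition Aprod (R : realType) (d : nat -> nat)
    (W : forall k : nat, 'M[R]_(d k, d k.-1)) (D k : nat) (hk : (k <= D)%N)
    : 'M[R]_(d D, d k) :=
  castmx (congr1 d (subnK hk), erefl) (Tprod W k (D - k)).

(* T(W_1,...,W_D) = sum_{k=1}^D Tr[A_k^T A_k] Tr[B_k Sigma B_k^T];
   the index i : 'I_D corresponds to k = i+1. *)
Definition Tobj (R : realType) (d : nat -> nat) (D : nat) (Sigma : 'M[R]_(d 0))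
    (W : forall k : nat, 'M[R]_(d k, d k.-1)) : R :=
  \sum_(i < D)
     \tr ((Aprod W (ltn_ord i))^T *m Aprod W (ltn_ord i)) *
     \tr (Bprod W i *m Sigma *m (Bprod W i)^T).

Definition diag_sqrt (R : realType) (r : nat) (s : 'rV[R]_r) : 'M[R]_r :=
  diag_mx (\row_j Num.sqrt (s 0 j)).

(* Main.v *)
Require Import Defs.
From HB Require Import structures.
From mathcomp Require Import all_boot all_order all_algebra.
From mathcomp Require Import reals exp.
From mathcomp Require Import ring lra.
Set Implicit Arguments. Unset Strict Implicit. Unset Printing Implicit Defensive.
Import Order.TTheory GRing.Theory Num.Theory.
Local Open Scope ring_scope.

Section Gen.
Variable R : realType.

Lemma tr_sq_ge0 m n (A : 'M[R]_(m, n)) : 0 <= \tr (A^T *m A).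
Proof.
rewrite /mxtrace; apply: sumr_ge0 => j _; rewrite mxE; apply: sumr_ge0 => i _.
by rewrite mxE -expr2 sqr_ge0.
Qed.

Lemma tr_sq_ge0' m n (A : 'M[R]_(m, n)) : 0 <= \tr (A *m A^T).
Proof. by rewrite mxtrace_mulC tr_sq_ge0. Qed.

Lemma tr_proj p q r (Z : 'M[R]_(p, q)) (M : 'M[R]_(r, q)) :
  M *m M^T = 1%:M -> \tr (Z *m M^T *m M *m Z^T) <= \tr (Z *m Z^T).
Proof.
move=> hM.
set P := M^T *m M.
have PP : P *m P = P by rewrite /P mulmxA -(mulmxA _ M) hM mulmx1.
have PT : P^T = P by rewrite /P trmx_mul trmxK.
set N := 1%:M - P.
have NN : N *m N^T = N.
  by rewrite /N linearB /= trmx1 PT mulmxBl mul1mx mulmxBr mulmx1 PP subrr subr0.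
have -> : Z *m Z^T = Z *m M^T *m M *m Z^T + (Z *m N) *m (Z *m N)^T.
  rewrite trmx_mul mulmxA -(mulmxA Z N) NN /N mulmxBr mulmx1 mulmxBl.
  by rewrite -!mulmxA addrC subrK.
by rewrite mxtraceD lerDl tr_sq_ge0'.
Qed.

Lemma CS m r (P Q : 'M[R]_(m, r)) :
  (\tr (P^T *m Q)) ^+ 2 <= \tr (P^T *m P) * \tr (Q^T *m Q).
Proof.
have key : forall a b, 0 <= a^+2 * \tr (P^T *m P) + 2 * a * b * \tr (P^T *m Q)
                         + b^+2 * \tr (Q^T *m Q).
  move=> a b; have := tr_sq_ge0 (a *: P + b *: Q).
  rewrite [(_ + _)^T]linearD /= ![(_ *: _)^T]linearZ /= mulmxDl !mulmxDr -!scalemxAl -!scalemxAr.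
  rewrite !mxtraceD !mxtraceZ.
  have -> : \tr (Q^T *m P) = \tr (P^T *m Q) by rewrite -mxtrace_tr trmx_mul trmxK.
  move=> h; apply: (le_trans h); rewrite le_eqVlt; apply/orP; left; apply/eqP; ring.
set pp := \tr (P^T *m P) in key *; set qq := \tr (Q^T *m Q) in key *.
set pq := \tr (P^T *m Q) in key *.
have hp : 0 <= pp by apply: tr_sq_ge0.
have hq : 0 <= qq by apply: tr_sq_ge0.
have [q0|q0] := eqVneq qq 0.
  have := key pq (- (pp + 1)); rewrite q0; nra.
have qp : 0 < qq by rewrite lt_neqAle eq_sym q0 hq.
have := key qq (- pq); nra.
Qed.

Lemma nuc p m n r (X : 'M[R]_(p, m)) (Y : 'M[R]_(m, n)) (L : 'M[R]_(p, r))
   (s : 'rV[R]_r) (Rh : 'M[R]_(r, n)) :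
  L^T *m L = 1%:M -> Rh *m Rh^T = 1%:M -> X *m Y = L *m diag_mx s *m Rh ->
  (\sum_j s 0 j) ^+ 2 <= \tr (X^T *m X) * \tr (Y *m Y^T).
Proof.
move=> hL hR hXY.
have -> : \sum_j s 0 j = \tr ((X^T *m L)^T *m (Y *m Rh^T)).
  rewrite trmx_mul trmxK -mxtrace_diag !mulmxA -(mulmxA _ X Y) hXY !mulmxA hL mul1mx.
  by rewrite -mulmxA hR mulmx1.
apply: (le_trans (CS _ _)); apply: ler_pM; rewrite ?tr_sq_ge0 //.
  have := @tr_proj _ _ _ (X^T) (L^T); rewrite trmxK => /(_ hL).
  rewrite trmxK !mulmxA => h; apply: le_trans h; rewrite le_eqVlt; apply/orP; left.
  rewrite trmx_mul trmxK.
  have h1 := mxtrace_mulC (L^T) (X *m X^T *m L).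
  have h2 := mxtrace_mulC (X^T *m L *m L^T) X.
  by rewrite !mulmxA in h1 h2; rewrite h1 h2.
have := @tr_proj _ _ _ Y Rh hR.
move=> h; apply: le_trans h; rewrite le_eqVlt; apply/orP; left.
by rewrite trmx_mul trmxK mxtrace_mulC !mulmxA.
Qed.

Lemma tr_cast m m' n (e : m = m') (A : 'M[R]_(m, n)) :
  \tr ((castmx (e, erefl n) A)^T *m castmx (e, erefl n) A) = \tr (A^T *m A).
Proof. by case: m' / e; rewrite castmx_id. Qed.

Lemma castmx_mull m m' n p (e : m = m') (A : 'M[R]_(m, n)) (B : 'M[R]_(n, p)) :
  castmx (e, erefl n) A *m B = castmx (e, erefl p) (A *m B).
Proof. by case: m' / e; rewrite !castmx_id. Qed.

Lemma zero_inner m (A : 'M[R]_(m, 0)) : A = 0.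
Proof. by apply/matrixP => i [j hj]. Qed.

Lemma posdef_unit n (A : 'M[R]_n) : posdef A -> A \in unitmx.
Proof.
move=> [_ hA]; rewrite unitmxE unitfE; apply/negP => /det0P [v v0 vA].
have := hA v^T; rewrite trmx_eq0 => /(_ v0); rewrite trmxK vA mul0mx mxE ltxx.
by [].
Qed.

Lemma posdef_diag n (A : 'M[R]_n) i : posdef A -> 0 < A i i.
Proof.
move=> [_ hA]; have := hA (delta_mx i 0).
have -> : delta_mx i 0 != 0 :> 'cV[R]_n.
  by apply/eqP => /matrixP /(_ i 0); rewrite !mxE !eqxx /= => /eqP; rewrite oner_eq0.
rewrite trmx_delta -rowE -colE !mxE => /(_ isT) //.
Qed.

End Gen.

Section Prods.
Variable R : realType.
Variable d : nat -> nat.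
Variable W : forall k : nat, 'M[R]_(d k, d k.-1).

Lemma Tprod_Bprod k n : Tprod W k n *m Bprod W k = Bprod W (n + k).
Proof.
elim: n => [|n IH] /=; first by rewrite mul1mx.
by rewrite -mulmxA IH.
Qed.

Lemma Bprod_cast n m (e : n = m) :
  castmx (congr1 d e, erefl (d 0)) (Bprod W n) = Bprod W m.
Proof. by case: m / e; rewrite castmx_id. Qed.

Lemma Aprod_Bprod D k (hk : (k <= D)%N) : Aprod W hk *m Bprod W k = Bprod W D.
Proof.
by rewrite /Aprod castmx_mull Tprod_Bprod Bprod_cast.
Qed.

Lemma Aprod_gen D k (hk : (k <= D)%N) m (e : (m + k)%N = D) :
  Aprod W hk = castmx (congr1 d e, erefl (d k)) (Tprod W k m).
Proof.
rewrite /Aprod.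
have em : m = (D - k)%N by rewrite -e addnK.
move: (subnK hk); rewrite -em => e'.
by rewrite (eq_irrelevance e' e).
Qed.

Lemma BprodS n : (0 < n)%N -> Bprod W n = W n *m Bprod W n.-1.
Proof. by case: n. Qed.

End Prods.
Section T.
Variable R : realType.
Variable D : nat.
Variable E : 'I_D -> R.
Hypothesis E0 : forall i, 0 <= E i.
Lemma agm : \prod_(i < D) E i <= ((\sum_(i < D) E i) / D%:R) ^+ D.
Proof.
have := @leif_AGM R _ predT E.
rewrite card_ord => /(_ (fun i _ => E0 i)) h.
exact: h.1.
Qed.
End T.

Lemma chain (R : realType) (n : nat) (a y t T P : R) :
  0 <= a -> 0 <= y -> 0 <= t -> 0 <= T ->
  y * t * a ^+ (2 * n) <= P -> P <= (T / (n.+1)%:R) ^+ n.+1 ->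
  (n.+1)%:R * powR a (2 * ((n.+1)%:R - 1) / (n.+1)%:R) * powR (y * t) ((n.+1)%:R^-1)
   <= T.
Proof.
move=> a0 y0 t0 T0 hP1 hP2.
set N : R := (n.+1)%:R.
have N0 : 0 < N by rewrite /N ltr0n.
have e1 : 2 * (N - 1) / N = (2 * n)%:R * N^-1.
  rewrite (_ : N - 1 = n%:R); first by rewrite natrM.
  by rewrite /N mulrSr addrK.
rewrite e1 powRrM powR_mulrn // -mulrA -powRM ?exprn_ge0 ?mulr_ge0 //.
have P0 : 0 <= P by apply: le_trans hP1; rewrite !mulr_ge0 ?exprn_ge0.
have TN0 : 0 <= T / N by rewrite divr_ge0 // ltW.
have h1 : powR (a ^+ (2 * n) * (y * t)) N^-1 <= powR ((T / N) ^+ n.+1) N^-1.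
  apply: (@ge0_ler_powR _ N^-1); first by rewrite invr_ge0 ltW.
  all: rewrite ?nnegrE.
  - by rewrite !mulr_ge0 ?exprn_ge0.
  - by rewrite exprn_ge0.
  - by apply: le_trans hP2; rewrite mulrC.
have h2 : powR ((T / N) ^+ n.+1) N^-1 = T / N.
  by rewrite -powR_mulrn // -powRrM -/N mulfV ?gt_eqF // powRr1.
rewrite h2 in h1.
have := ler_wpM2l (ltW N0) h1.
by rewrite [N * (T / N)]mulrC divfK ?gt_eqF.
Qed.
Lemma lower (R : realType) (D : nat) (d : nat -> nat) (r : nat)
  (V : 'M[R]_(d D, d 0)) (Sigma Sh : 'M[R]_(d 0))
  (L : 'M[R]_(d D, r)) (s : 'rV[R]_r) (Rh : 'M[R]_(r, d 0)) :
  (1 <= D)%N -> Sh^T = Sh -> Sh *m Sh = Sigma -> L^T *m L = 1%:M ->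
  Rh *m Rh^T = 1%:M -> (forall j, 0 < s 0 j) -> V *m Sh = L *m diag_mx s *m Rh ->
  forall W : forall k : nat, 'M[R]_(d k, d k.-1), Bprod W D = V ->
  D%:R * powR (\sum_(j < r) s 0 j) (2 * (D%:R - 1) / D%:R)
    * powR ((d D)%:R * \tr Sigma) (D%:R^-1) <= Tobj D Sigma W.
Proof.
move=> D1 hShT hSig hL hR hs hV W hW.
have beta k : \tr (Bprod W k *m Sigma *m (Bprod W k)^T)
    = \tr ((Bprod W k *m Sh) *m (Bprod W k *m Sh)^T).
  by rewrite -hSig trmx_mul hShT !mulmxA.
set a := \sum_(j < r) s 0 j.
have a0 : 0 <= a by apply: sumr_ge0 => j _; apply: ltW.
have t0 : 0 <= \tr Sigma by have := tr_sq_ge0 Sh; rewrite hShT hSig.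
have key k (hk : (k.+1 <= D)%N) : a ^+ 2 <= \tr ((Aprod W hk)^T *m Aprod W hk)
     * \tr (Bprod W k.+1 *m Sigma *m (Bprod W k.+1)^T).
  rewrite beta; apply: (nuc hL hR).
  by rewrite mulmxA Aprod_Bprod hW.
have al0 k (hk : (k <= D)%N) : 0 <= \tr ((Aprod W hk)^T *m Aprod W hk).
  exact: tr_sq_ge0.
have be0 k : 0 <= \tr (Bprod W k *m Sigma *m (Bprod W k)^T).
  by rewrite beta tr_sq_ge0'.
destruct D as [|n]; first by [].
rewrite /Tobj.
apply: (chain (P := \prod_(i < n.+1) (\tr ((Aprod W (ltn_ord i))^T *m Aprod W (ltn_ord i)) *
     \tr (Bprod W i *m Sigma *m (Bprod W i)^T)))) => //.
- by apply: sumr_ge0 => i _; rewrite mulr_ge0.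
- rewrite big_split /= big_ord_recr big_ord_recl /=.
  have -> : \tr ((Aprod W (ltn_ord (@ord_max n)))^T *m Aprod W (ltn_ord ord_max))
      = (d n.+1)%:R.
    by rewrite (@Aprod_gen _ _ W _ _ _ 0 erefl) tr_cast /= trmx1 mul1mx mxtrace1.
  rewrite mul1mx trmx1 mulmx1.
  set A1 := \prod_(i < n) _; set B2 := \prod_(i < n) _.
  have hAB : a ^+ (2 * n) <= A1 * B2.
    rewrite /A1 /B2 -big_split /= exprM -[n in _ ^+ n]card_ord -prodr_const.
    apply: ler_prod => i _; rewrite sqr_ge0 /=.
    exact: key.
  have := ler_wpM2l (mulr_ge0 (ler0n _ (d n.+1)) t0) hAB.
  move=> h; apply: (le_trans h); rewrite le_eqVlt; apply/orP; left; apply/eqP; ring.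
- apply: agm => i; exact: mulr_ge0.
Qed.
Section Min.
Variable R : realType.
Variable d : nat -> nat.
Variable r : nat.
Variable W : forall k : nat, 'M[R]_(d k, d k.-1).
Variable U : forall i : nat, 'M[R]_(d i, r).
Variable s : 'rV[R]_r.
Hypothesis hs : forall j, 0 < s 0 j.
Local Notation S2 := (diag_sqrt s).

Lemma S2T : S2^T = S2.
Proof. by rewrite /diag_sqrt tr_diag_mx. Qed.

Lemma S2S2 : S2 *m S2 = diag_mx s.
Proof.
rewrite /diag_sqrt mulmx_diag; congr diag_mx; apply/rowP => j.
by rewrite !mxE -expr2 sqr_sqrtr // ltW.
Qed.

Lemma trZZ m n (al : R) (X : 'M[R]_(m, n)) :
  \tr ((al *: X)^T *m (al *: X)) = al ^+ 2 * \tr (X^T *m X).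
Proof. by rewrite [(al *: X)^T]linearZ /= -scalemxAl -scalemxAr scalerA mxtraceZ expr2. Qed.

Lemma trZZ' m n (al : R) (X : 'M[R]_(m, n)) :
  \tr ((al *: X) *m (al *: X)^T) = al ^+ 2 * \tr (X *m X^T).
Proof. by rewrite [(al *: X)^T]linearZ /= -scalemxAl -scalemxAr scalerA mxtraceZ expr2. Qed.

Variable N : nat.
Variable c : R.
Hypothesis hmid : forall k, (2 <= k)%N -> (k <= N.-1)%N -> W k = c *: (U k *m (U k.-1)^T).
Hypothesis hU : forall i, (1 <= i)%N -> (i <= N.-1)%N -> (U i)^T *m U i = 1%:M.

Lemma Umid k m : (1 <= k)%N -> (m + k <= N.-1)%N ->
  (U (m + k))^T *m Tprod W k m = c ^+ m *: (U k)^T.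
Proof.
move=> k1; elim: m => [|m IH] hm /=; first by rewrite mulmx1 expr0 scale1r.
rewrite hmid //; last by rewrite ltnS (leq_trans k1) // leq_addl.
rewrite -scalemxAl -scalemxAr !mulmxA hU //= -mulmxA mul1mx IH; last by apply: ltnW.
by rewrite scalerA exprS.
Qed.

End Min.

Lemma Atop (R : realType) (d : nat -> nat) (r : nat)
  (W : forall k : nat, 'M[R]_(d k, d k.-1)) (U : forall i : nat, 'M[R]_(d i, r))
  (s : 'rV[R]_r) (hs : forall j, 0 < s 0 j) (N : nat) (c : R)
  (hmid : forall k, (2 <= k)%N -> (k <= N.-1)%N -> W k = c *: (U k *m (U k.-1)^T))
  (hU : forall i, (1 <= i)%N -> (i <= N.-1)%N -> (U i)^T *m U i = 1%:M)
  (Lt : 'M[R]_(d N, r)) cD m k :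
  W N = cD *: (Lt *m diag_sqrt s *m (U N.-1)^T) -> Lt^T *m Lt = 1%:M ->
  (1 <= k)%N -> (m + k).+1 = N ->
  \tr ((Tprod W k m.+1)^T *m Tprod W k m.+1) = (cD * c ^+ m) ^+ 2 * \sum_j s 0 j.
Proof.
move=> hWN hL k1 e; subst N => /=.
rewrite hWN -scalemxAl -!mulmxA; change ((m + k).+1.-1) with (m + k)%N.
rewrite (Umid hmid hU) // -!scalemxAr !scalerA [(_ *: _)^T]linearZ /= -scalemxAl scalerA mxtraceZ -expr2.
congr (_ * _).
rewrite !trmx_mul trmxK S2T !mulmxA -(mulmxA _ Lt^T) hL mulmx1.
rewrite mxtrace_mulC !mulmxA hU ?mul1mx ?S2S2 ?mxtrace_diag //.
by rewrite leq_addl.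
Qed.

Lemma Bform (R : realType) (d : nat -> nat) (r : nat)
  (W : forall k : nat, 'M[R]_(d k, d k.-1)) (U : forall i : nat, 'M[R]_(d i, r))
  (s : 'rV[R]_r) (N : nat) (c c1 : R)
  (hmid : forall k, (2 <= k)%N -> (k <= N.-1)%N -> W k = c *: (U k *m (U k.-1)^T))
  (hU : forall i, (1 <= i)%N -> (i <= N.-1)%N -> (U i)^T *m U i = 1%:M)
  (Sh : 'M[R]_(d 0)) (Rh : 'M[R]_(r, d 0))
  (hW1 : W 1%N *m Sh = c1 *: (U 1%N *m diag_sqrt s *m Rh)) :
  forall n, (1 <= n)%N -> (n <= N.-1)%N ->
  Bprod W n *m Sh = (c ^+ n.-1 * c1) *: (U n *m diag_sqrt s *m Rh).
Proof.
elim => [//|n IH] _ hn.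
case: n IH hn => [|n] IH hn /=; first by rewrite mulmx1 hW1 expr0 mul1r.
rewrite -mulmxA IH //; last by apply: ltnW.
rewrite hmid // -scalemxAl -scalemxAr scalerA /=.
rewrite -!mulmxA (mulmxA (U n.+1)^T) hU ?mul1mx; last by apply: ltnW.
  by rewrite mulrA -exprS.
by [].
Qed.

Lemma Btr (R : realType) (d : nat -> nat) (r : nat)
  (W : forall k : nat, 'M[R]_(d k, d k.-1)) (U : forall i : nat, 'M[R]_(d i, r))
  (s : 'rV[R]_r) (hs : forall j, 0 < s 0 j) (N : nat) (c c1 : R)
  (hmid : forall k, (2 <= k)%N -> (k <= N.-1)%N -> W k = c *: (U k *m (U k.-1)^T))
  (hU : forall i, (1 <= i)%N -> (i <= N.-1)%N -> (U i)^T *m U i = 1%:M)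
  (Sigma Sh : 'M[R]_(d 0)) (Rh : 'M[R]_(r, d 0))
  (hShT : Sh^T = Sh) (hSig : Sh *m Sh = Sigma) (hR : Rh *m Rh^T = 1%:M)
  (hW1 : W 1%N *m Sh = c1 *: (U 1%N *m diag_sqrt s *m Rh)) n :
  (1 <= n)%N -> (n <= N.-1)%N ->
  \tr (Bprod W n *m Sigma *m (Bprod W n)^T) = (c ^+ n.-1 * c1) ^+ 2 * \sum_j s 0 j.
Proof.
move=> n1 nN.
have -> : \tr (Bprod W n *m Sigma *m (Bprod W n)^T)
    = \tr ((Bprod W n *m Sh) *m (Bprod W n *m Sh)^T).
  by rewrite -hSig trmx_mul hShT !mulmxA.
rewrite (Bform hmid hU hW1) // trZZ'; congr (_ * _).
rewrite !trmx_mul S2T -!mulmxA (mulmxA Rh) hR mul1mx mxtrace_mulC -!mulmxA hU //.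
by rewrite mulmx1 S2S2 // mxtrace_diag.
Qed.

From mathcomp Require Import zify.

Lemma Tsum (R : realType) (d : nat -> nat) (r : nat)
  (W : forall k : nat, 'M[R]_(d k, d k.-1)) (U : forall i : nat, 'M[R]_(d i, r))
  (s : 'rV[R]_r) (hs : forall j, 0 < s 0 j) (n : nat) (c cD c1 : R)
  (hmid : forall k, (2 <= k)%N -> (k <= n.+1)%N -> W k = c *: (U k *m (U k.-1)^T))
  (hU : forall i, (1 <= i)%N -> (i <= n.+1)%N -> (U i)^T *m U i = 1%:M)
  (L : 'M[R]_(d n.+2, r)) (hL : L^T *m L = 1%:M)
  (hWD : W n.+2 = cD *: (L *m diag_sqrt s *m (U n.+1)^T))
  (Sigma Sh : 'M[R]_(d 0)) (Rh : 'M[R]_(r, d 0))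
  (hShT : Sh^T = Sh) (hSig : Sh *m Sh = Sigma) (hR : Rh *m Rh^T = 1%:M)
  (hW1 : W 1%N *m Sh = c1 *: (U 1%N *m diag_sqrt s *m Rh)) (v : R) :
  let a := \sum_j s 0 j in
  (cD * c ^+ n) ^+ 2 * a * \tr Sigma = v ->
  (d n.+2)%:R * ((c ^+ n * c1) ^+ 2 * a) = v ->
  (forall q j, n = (q + j.+1)%N -> (cD * c ^+ q) ^+ 2 * a * ((c ^+ j * c1) ^+ 2 * a) = v) ->
  Tobj n.+2 Sigma W = v *+ n.+2.
Proof.
move=> a h1 h2 h3.
rewrite /Tobj (eq_bigr (fun=> v)) ?sumr_const ?card_ord //.
move=> [[|i] hi] _.
- rewrite (@Aprod_gen _ _ W _ _ _ _ (addn1 n.+1)) tr_cast.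
  rewrite (Atop (N := n.+2) (Lt := L) (cD := cD) hs hmid hU) //; last by rewrite addn1.
  by rewrite /= mul1mx trmx1 mulmx1.
- have [hin|hin] := ltnP i n.
  + pose q := (n - i.+1)%N.
    have eq1 : (q.+1 + i.+2)%N = n.+2 by rewrite /q; lia.
    rewrite (@Aprod_gen _ _ W _ _ _ _ eq1) tr_cast.
    rewrite (Atop (N := n.+2) (Lt := L) (cD := cD) hs hmid hU) //.
    rewrite (Btr (N := n.+2) hs hmid hU hShT hSig hR hW1) //.
    by apply: h3; rewrite /q /=; lia.
  + have ein : i = n by lia.
    subst i.
    rewrite (@Aprod_gen _ _ W _ _ _ _ (erefl (0 + n.+2)%N)) tr_cast /= trmx1 mul1mx mxtrace1.
    by rewrite (Btr (N := n.+2) hs hmid hU hShT hSig hR hW1).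
Qed.

From mathcomp Require Import sequences.
Lemma arith (R : realType) (n : nat) (la ly lt : R) :
  let D := n.+2 in
  let trS := expR la in let dy := expR ly in let trSig := expR lt in
  let cD := powR trS (- (D%:R - 2) / (2 * D%:R)) * powR dy ((D%:R - 1) / (2 * D%:R))
           * powR trSig (- 1 / (2 * D%:R)) in
  let c := powR trS (D%:R^-1) * powR (dy * trSig) (- 1 / (2 * D%:R)) in
  let c1 := powR trS (- (D%:R - 2) / (2 * D%:R)) * powR dy (- 1 / (2 * D%:R))
           * powR trSig ((D%:R - 1) / (2 * D%:R)) in
  let v := D%:R * powR trS (2 * (D%:R - 1) / D%:R)
                  * powR (dy * trSig) (D%:R^-1) / D%:R in
  [/\ (cD * c ^+ n) ^+ 2 * trS * trSig = v,
      dy * ((c ^+ n * c1) ^+ 2 * trS) = v,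
      (forall q j, n = (q + j.+1)%N ->
         (cD * c ^+ q) ^+ 2 * trS * ((c ^+ j * c1) ^+ 2 * trS) = v) &
      cD * (c ^+ n * c1) = 1].
Proof.
move=> D trS dy trSig cD c c1 v.
have N0 : (D%:R : R) != 0 by rewrite pnatr_eq0.
have N0' : (n%:R + 2 : R) != 0.
  by move: N0; rewrite /D -addn2 natrD.
have ev : v = expR (la * (2 * (D%:R - 1) / D%:R) + (ly + lt) * D%:R^-1).
  rewrite /v mulrC !mulrA mulVf // mul1r /trS /dy /trSig -expRD -!expRM -expRD !mulrA.
  by [].
rewrite /cD /c /c1 /trS /dy /trSig ev -!expRD -!expRM -!expRD.
rewrite -!expRM_natr -!expRD -!expRM_natr -!expRD.
split.
- by congr expR; rewrite /D -addn2 natrD; field.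
- by congr expR; rewrite /D -addn2 natrD; field.
- move=> q j hn; rewrite -!expRM_natr -!expRD -!expRM_natr -!expRD.
  have eN : ((q + j.+1).+2%:R : R) = q%:R + j%:R + 3.
    by rewrite !mulrSr natrD !mulrSr; ring.
  have N1 : (q%:R + j%:R + 3 : R) != 0 by rewrite -eN pnatr_eq0.
  rewrite /D hn eN.
  by congr expR; field.
- apply: (@eq_trans _ _ (expR 0)); last exact: expR0.
  by congr expR; rewrite /D -addn2 natrD; field.
Qed.

Lemma Bfinal (R : realType) (d : nat -> nat) (r : nat)
  (W : forall k : nat, 'M[R]_(d k, d k.-1)) (U : forall i : nat, 'M[R]_(d i, r))
  (s : 'rV[R]_r) (hs : forall j, 0 < s 0 j) (n : nat) (c cD c1 : R)
  (hmid : forall k, (2 <= k)%N -> (k <= n.+1)%N -> W k = c *: (U k *m (U k.-1)^T))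
  (hU : forall i, (1 <= i)%N -> (i <= n.+1)%N -> (U i)^T *m U i = 1%:M)
  (L : 'M[R]_(d n.+2, r)) (V : 'M[R]_(d n.+2, d 0))
  (hWD : W n.+2 = cD *: (L *m diag_sqrt s *m (U n.+1)^T))
  (Sh : 'M[R]_(d 0)) (Rh : 'M[R]_(r, d 0))
  (hW1 : W 1%N *m Sh = c1 *: (U 1%N *m diag_sqrt s *m Rh))
  (hV : V *m Sh = L *m diag_mx s *m Rh) :
  Bprod W n.+2 *m Sh = (cD * (c ^+ n * c1)) *: (V *m Sh).
Proof.
rewrite /= -mulmxA (Bform (N := n.+2) hmid hU hW1) //= hWD -scalemxAl -scalemxAr scalerA hV.
congr (_ *: _).
by rewrite -!mulmxA (mulmxA (U n.+1)^T) hU // mul1mx !mulmxA -[in LHS](mulmxA L) S2S2.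
Qed.
Theorem lemma4 (R : realType) (D : nat) (d : nat -> nat) (r : nat)
  (V : 'M[R]_(d D, d 0)) (Sigma Sh : 'M[R]_(d 0))
  (L : 'M[R]_(d D, r)) (s : 'rV[R]_r) (Rh : 'M[R]_(r, d 0)) :
  (1 <= D)%N ->
  posdef Sigma ->
  (* Sh = Sigma^(1/2), the positive definite square root of Sigma *)
  posdef Sh -> Sh *m Sh = Sigma ->
  (* compact SVD  V Sigma^(1/2) = L diag(s) Rh *)
  L^T *m L = 1%:M -> Rh *m Rh^T = 1%:M -> (forall j, 0 < s 0 j) ->
  V *m Sh = L *m diag_mx s *m Rh ->
  \rank (V *m Sh) = r ->
  (forall k, (k <= D)%N -> (r <= d k)%N) ->
  let trS := \sum_(j < r) s 0 j in
  let dy := (d D)%:R : R in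
  let trSig := \tr Sigma in
  let val := D%:R * powR trS (2 * (D%:R - 1) / D%:R)
                  * powR (dy * trSig) (D%:R^-1) in
  (* val is a lower bound of T on the constraint set *)
  (forall W : forall k : nat, 'M[R]_(d k, d k.-1),
      Bprod W D = V -> val <= Tobj D Sigma W) /\
  (* val is attained *)
  (exists W : forall k : nat, 'M[R]_(d k, d k.-1),
      Bprod W D = V /\ Tobj D Sigma W = val) /\
  (* the explicit minimizers (meaningful for D >= 2) *)
  ((2 <= D)%N ->
   forall (U : forall i : nat, 'M[R]_(d i, r)),
   (forall i, (1 <= i)%N -> (i <= D.-1)%N -> (U i)^T *m U i = 1%:M) ->
   forall W : forall k : nat, 'M[R]_(d k, d k.-1),
   W D = (powR trS (- (D%:R - 2) / (2 * D%:R)) * powR dy ((D%:R - 1) / (2 * D%:R))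
           * powR trSig (- 1 / (2 * D%:R))) *: (L *m diag_sqrt s *m (U D.-1)^T) ->
   (forall k, (2 <= k)%N -> (k <= D.-1)%N ->
      W k = (powR trS (D%:R^-1) * powR (dy * trSig) (- 1 / (2 * D%:R)))
              *: (U k *m (U k.-1)^T)) ->
   W 1%N *m Sh = (powR trS (- (D%:R - 2) / (2 * D%:R)) * powR dy (- 1 / (2 * D%:R))
           * powR trSig ((D%:R - 1) / (2 * D%:R))) *: (U 1%N *m diag_sqrt s *m Rh) ->
   Bprod W D = V /\ Tobj D Sigma W = val).
Proof.
move=> D1 hSpd hShpd hSig hL hR hs hV hrank hdk trS dy trSig val; clear hrank.
have hShT : Sh^T = Sh by case: hShpd.
have Shu := posdef_unit hShpd.
have part1 : forall W : forall k : nat, 'M[R]_(d k, d k.-1),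
    Bprod W D = V -> val <= Tobj D Sigma W.
  by move=> W hW; exact: (lower D1 hShT hSig hL hR hs hV hW).
split => //.
have t0 : 0 <= trSig by have := tr_sq_ge0 Sh; rewrite hShT hSig.
have cancelSh : forall X Y : 'M[R]_(d D, d 0), X *m Sh = Y *m Sh -> X = Y.
  by move=> X Y h; rewrite -(mulmxK Shu X) h mulmxK.
destruct D as [|[|n]]; first by [].
- split; last by [].
  exists (fun k => conform_mx 0 V); split.
    by rewrite /= mulmx1 conform_mx_id.
  rewrite /Tobj big_ord1 (@Aprod_gen _ _ _ _ _ _ 0 erefl) tr_cast /=.
  rewrite trmx1 !mul1mx ?mulmx1 mxtrace1 /val.
  rewrite mulr1n subrr mulr0 mul0r powRr0 invr1 powRr1 ?mulr_ge0 ?ler0n //.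
  by rewrite trmx1 mulmx1 !mul1r.
- set P3 := (X in _ /\ X).
  have p3 : P3.
    move=> _ U hU W hWD hmid hW1.
    have hB := Bfinal hs hmid hU hWD hW1 hV.
    have N0 : ((n.+2)%:R : R) != 0 by rewrite pnatr_eq0.
    have [r0|rpos] := posnP r.
    + subst r.
      have a0 : trS = 0 by rewrite /trS big_ord0.
      have v0 : val = 0.
        rewrite /val a0 powR0 ?mulr0 ?mul0r //.
        by rewrite gt_eqF // divr_gt0 ?mulr_gt0 ?ltr0n // subr_gt0 ltr1n.
      have VS0 : V *m Sh = 0 by rewrite hV (zero_inner L) !mul0mx.
      split.
        by apply: cancelSh; rewrite hB VS0 scaler0.
      have := Tsum hs hmid hU hL hWD hShT hSig hR hW1 (v := 0).
      rewrite -/trS a0 v0 mul0rn; apply.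
      * by rewrite mulr0 mul0r.
      * by rewrite !mulr0.
      * by move=> q j _; rewrite !mulr0.
    + have a0 : 0 < trS.
        rewrite /trS (bigD1 (Ordinal rpos)) //=.
        apply: (lt_le_trans (hs (Ordinal rpos))); rewrite lerDl.
        by apply: sumr_ge0 => j _; apply: ltW.
      have y0 : 0 < dy by rewrite /dy ltr0n (leq_trans rpos) // hdk.
      have d0 : (0 < d 0)%N by rewrite (leq_trans rpos) // hdk.
      have tp : 0 < trSig.
        rewrite /trSig /mxtrace (bigD1 (Ordinal d0)) //=.
        apply: (lt_le_trans (posdef_diag (Ordinal d0) hSpd)); rewrite lerDl.
        by apply: sumr_ge0 => j _; apply: ltW; apply: posdef_diag.
      have [h1 h2 h3 h4] := arith n (ln trS) (ln dy) (ln trSig).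
      rewrite !lnK ?posrE // in h1 h2 h3 h4.
      split.
        by apply: cancelSh; rewrite hB h4 scale1r.
      have := Tsum hs hmid hU hL hWD hShT hSig hR hW1 h1 h2 h3.
      have e (x : R) : (x / (n.+2)%:R) *+ n.+2 = x.
        by rewrite -(mulr_natr (x / (n.+2)%:R)) -mulrA mulVf // mulr1.
      by move=> ->; rewrite e.
  split; last exact: p3.
  pose U := fun i : nat => (pid_mx r : 'M[R]_(d i, r)).
  pose cD := powR trS (- ((n.+2)%:R - 2) / (2 * (n.+2)%:R))
    * powR dy (((n.+2)%:R - 1) / (2 * (n.+2)%:R)) * powR trSig (- 1 / (2 * (n.+2)%:R)).
  pose c := powR trS ((n.+2)%:R^-1) * powR (dy * trSig) (- 1 / (2 * (n.+2)%:R)).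
  pose c1 := powR trS (- ((n.+2)%:R - 2) / (2 * (n.+2)%:R))
    * powR dy (- 1 / (2 * (n.+2)%:R)) * powR trSig (((n.+2)%:R - 1) / (2 * (n.+2)%:R)).
  pose W := fun k : nat => (if k == n.+2 then
       cD *: (conform_mx (0 : 'M[R]_(d k, r)) L *m diag_sqrt s *m (U k.-1)^T)
     else if k == 1%N then
       conform_mx (0 : 'M[R]_(d k, d k.-1)) (c1 *: (U 1%N *m diag_sqrt s *m Rh *m invmx Sh))
     else c *: (U k *m (U k.-1)^T)).
  exists W; apply: (p3 isT U).
  - move=> i i1 hi; rewrite /U tr_pid_mx mul_pid_mx minnn.
    by rewrite (minn_idPr _) ?pid_mx_1 // hdk // (leq_trans hi).
  - by rewrite /W eqxx conform_mx_id.
  - move=> k k2 kn; rewrite /W.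
    have -> : (k == n.+2) = false by apply/negbTE; rewrite neq_ltn ltnS kn.
    by have -> : (k == 1%N) = false by apply/negbTE; rewrite neq_ltn k2 orbT.
  - by rewrite /W /= conform_mx_id -scalemxAl mulmxKV.
Qed.
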